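(* Consider the linear mixture $\textsc{lin}$ with parameter space the unit simplex $\mathcal{S}=\{\mathbf{w}\in\mathbb{R}^m:\mathbf{w}\ge0,\ \sum_iw_i=1\}$. Then for every probability matrix $\mathbf{P}$ over $\mathcal{P}_+$ and every $x\in\mathcal{X}$, the function $\mathbf{w}\mapsto\ell(x,\textsc{lin}(\mathbf{w},\mathbf{P}))$ is convex and differentiable on $\mathcal{S}$, and for all $\mathbf{w}\in\mathcal{S}$ $$\lvert\nabla_{\mathbf{w}}\ell(x,\textsc{lin}(\mathbf{w},\mathbf{P}))\rvert^2\le a\,\ell(x,\textsc{lin}(\mathbf{w},\mathbf{P}))$$ for every $a\ge m\log_2^2(e)\,\frac{p_{\max}(\mathbf{P})^2}{p_{\min}(\mathbf{P})^2\log_2(1/p_{\min}(\mathbf{P}))}$. In particular $\textsc{lin}$ satisfies the properties of a nice mixture, with the constant in the gradient condition given by this bound.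
   Context: $\mathcal{X}=\{1,\dots,N\}$, $1<N<\infty$; $\mathcal{P}_+$ is the set of distributions on $\mathcal{X}$ with positive probability on each letter; $m>1$. A probability matrix over $\mathcal{P}_+$ is $\mathbf{P}=(\mathbf{p}(1)\cdots\mathbf{p}(N))$ with $\mathbf{p}(x)=(p_1(x),\dots,p_m(x))^{\mathsf T}$, $p_i\in\mathcal{P}_+$. $p_{\max}(\mathbf{P}):=\max_{x}\max_{i}p_i(x)$, $p_{\min}(\mathbf{P}):=\min_{x}\min_{i}p_i(x)$. $\ell(x,p):=-\log_2p(x)$. The linear mixture is $\textsc{lin}(x;\mathbf{w},\mathbf{P}):=\mathbf{w}^{\mathsf T}\mathbf{p}(x)$ for $\mathbf{w}\in\mathcal{S}$. A mixture with parameter space $\mathcal{W}$ is nice if $\mathcal{W}$ is non-empty, compact, convex, $\mathbf{w}\mapsto\ell(x,\textsc{mix}(\mathbf{w},\mathbf{P}))$ is convex and differentiable on $\mathcal{W}$ for all $\mathbf{P},x$, and there is $a>0$ with $\lvert\nabla_{\mathbf{w}}\ell(x,\textsc{mix}(\mathbf{w},\mathbf{P}))\rvert^2\le a\,\ell(x,\textsc{mix}(\mathbf{w},\mathbf{P}))$ for all $\mathbf{w},\mathbf{P},x$. *)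

(* Defs.v *)
From HB Require Import structures.
From mathcomp Require Import all_boot all_order all_algebra.
From mathcomp Require Import all_classical all_reals all_analysis.
Set Implicit Arguments. Unset Strict Implicit. Unset Printing Implicit Defensive.
Import Order.TTheory GRing.Theory Num.Theory.
Import numFieldNormedType.Exports.
Local Open Scope ring_scope.
Local Open Scope classical_set_scope.

(* A probability matrix P over P_+ : m rows (experts) i, N columns (letters) x;
   entry P i x = p_i(x).  Each row p_i is a distribution with full support. *)
Definition prob_matrix_pos (R : realType) (m N : nat) (P : 'M[R]_(m, N)) : Prop :=
  (forall i x, 0 < P i x) /\ (forall i, \sum_(x < N) P i x = 1).

(* p_max and p_min of P (entries lie in (0,1], so the neutral elements 0 / 1
   do not affect the value). *)
Definition pmax (R : realType) (m N : nat) (P : 'M[R]_(m, N)) : R :=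
  \big[Num.max/0]_(i < m) \big[Num.max/0]_(x < N) P i x.
Definition pmin (R : realType) (m N : nat) (P : 'M[R]_(m, N)) : R :=
  \big[Num.min/1]_(i < m) \big[Num.min/1]_(x < N) P i x.

Definition log2 (R : realType) (y : R) : R := ln y / ln 2.

Definition codelen (R : realType) (q : R) : R := - log2 q.

Definition simplex (R : realType) (m : nat) : set 'rV[R]_m :=
  [set w | (forall i, 0 <= w ord0 i) /\ \sum_(i < m) w ord0 i = 1].

Definition lin (R : realType) (m N : nat) (w : 'rV[R]_m) (P : 'M[R]_(m, N))
  (x : 'I_N) : R := \sum_(i < m) w ord0 i * P i x.

Definition lin_loss (R : realType) (m N : nat) (P : 'M[R]_(m, N)) (x : 'I_N)
  : 'rV[R]_m -> R := fun w => codelen (lin w P x).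

(* squared Euclidean norm of the gradient of f at w (components are the
   differential applied to the standard basis vectors) *)
Definition grad_norm2 (R : realType) (m : nat) (f : 'rV[R]_m -> R)
  (w : 'rV[R]_m) : R :=
  \sum_(i < m) ('d f w (delta_mx ord0 i : 'rV[R]_m)) ^+ 2.

(* Main.v *)
Require Import Defs.
From HB Require Import structures.
From mathcomp Require Import all_boot all_order all_algebra.
From mathcomp Require Import all_classical all_reals all_analysis.
From mathcomp Require Import ring lra.
Import Order.TTheory GRing.Theory Num.Theory.
Import numFieldNormedType.Exports.
Local Open Scope ring_scope.
Local Open Scope classical_set_scope.
Section S.
Variables (R : realType) (m N : nat) (P : 'M[R]_(m, N)) (x : 'I_N).

Definition Lf (w : 'rV[R]_m) : R := lin w P x.

Lemma Lf_linear : linear Lf.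
Proof.
move=> a u v; rewrite /Lf /lin /= scaler_sumr -big_split /=.
by apply: eq_bigr => i _; rewrite !mxE mulrDl -mulrA.
Qed.

HB.instance Definition _ := GRing.isLinear.Build R _ _ _ Lf Lf_linear.

Lemma Lf_cont : continuous Lf.
Proof.
rewrite /Lf /lin.
apply: (@continuous_big _ _ +%R 0 xpredT) => //.
  exact: add_continuous.
move=> i _ w.
apply: (continuousM (s := fun v : 'rV[R]_m => v ord0 i) (t := cst (P i x))).
  exact: coord_continuous.
exact: cst_continuous.
Qed.
End S.

Notation Lf_ := (@Lf _ _ _).
Lemma codelen_is_derive (R : realType) (y : R) : 0 < y ->
  is_derive y 1 (@codelen R) (- ((ln 2)^-1 *: y^-1)).
Proof.
move=> y0.
have -> : @codelen R = - ((ln 2)^-1 *: (@ln R)).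
  by apply/funext => q; rewrite /codelen /log2 /= mulrC.
apply: is_deriveN; apply: is_deriveZ; exact: is_derive1_ln.
Qed.

Lemma dloss (R : realType) m N (P : 'M[R]_(m, N)) x w v : 0 < Lf_ P x w ->
  'd (lin_loss P x) w v = - ((ln 2)^-1 * (Lf_ P x w)^-1) * Lf_ P x v.
Proof.
move=> Lw0.
have -> : lin_loss P x = @codelen R \o Lf_ P x by [].
have dL : differentiable (Lf_ P x) w by apply: linear_differentiable; exact: Lf_cont.
have dg : differentiable (@codelen R) (Lf_ P x w).
  apply/derivable1_diffP.
  by have [] := @codelen_is_derive R _ Lw0.
rewrite diff_comp // /= diff_lin; last exact: Lf_cont.
rewrite diff1E // derive1E.
have H := @codelen_is_derive R _ Lw0.
rewrite derive_val /= mulrC.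
by [].
Qed.

Lemma Lf_bounds (R : realType) m N (P : 'M[R]_(m, N)) x (w : 'rV[R]_m) (c d : R) :
  simplex w -> (forall i, c <= P i x <= d) -> c <= Lf_ P x w <= d.
Proof.
move=> [w0 w1] hb.
have e1 : Lf_ P x w - c = \sum_(i < m) w ord0 i * (P i x - c).
  rewrite /Lf /lin -[c in LHS]mul1r -w1 mulr_suml -sumrB.
  by apply: eq_bigr => i _; rewrite mulrBr.
have e2 : d - Lf_ P x w = \sum_(i < m) w ord0 i * (d - P i x).
  rewrite /Lf /lin -[d in LHS]mul1r -w1 mulr_suml -sumrB.
  by apply: eq_bigr => i _; rewrite mulrBr.
apply/andP; split.
  rewrite -subr_ge0 e1; apply: sumr_ge0 => i _; apply: mulr_ge0 => //.
  by rewrite subr_ge0; case/andP: (hb i).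
rewrite -subr_ge0 e2; apply: sumr_ge0 => i _; apply: mulr_ge0 => //.
by rewrite subr_ge0; case/andP: (hb i).
Qed.

Local Open Scope convex_scope.
Lemma loss_convex (R : realType) m N (P : 'M[R]_(m, N)) x :
  (forall w, simplex w -> 0 < Lf_ P x w) ->
  convex_function (@simplex R m) (lin_loss P x).
Proof.
move=> pos t u v /set_mem uS /set_mem vS.
have hL : Lf_ P x (u <| t |> v) = (Lf_ P x u : R^o) <| t |> (Lf_ P x v : R^o).
  have -> : (u <| t |> v) = t%:inum *: (u : 'rV[R]_m) + (1 - t%:inum) *: (v : 'rV[R]_m) by [].
  by rewrite linearD !linearZ /= convRE.
rewrite /lin_loss -/(Lf_ P x (u <| t |> v)) hL.
have := concave_ln t (pos _ uS) (pos _ vS).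
rewrite /codelen /log2 !convRE.
have l2 : 0 < ln (2 : R) by rewrite ln_gt0 // ltr1n.
move=> H.
change (lin u P x) with (Lf_ P x u); change (lin v P x) with (Lf_ P x v).
rewrite !mulrN -opprD lerN2 !mulrA -mulrDl ler_wpM2r // invr_ge0 ltW //.
Qed.
Local Close Scope convex_scope.
Section An.
Variable R : realType.

Lemma ln_le_sub1 (y : R) : 0 < y -> ln y <= y - 1.
Proof.
move=> y0; have := @le_ln1Dx R (y - 1).
rewrite addrCA subrr addr0; apply; lra.
Qed.

Lemma ln_ge_1subV (y : R) : 0 < y -> 1 - y^-1 <= ln y.
Proof.
move=> y0; have := @ln_le_sub1 y^-1 ltac:(by rewrite invr_gt0).
rewrite lnV ?posrE //; lra.
Qed.

Lemma ln2_ge : 37/60 <= ln (2 : R).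
Proof.
have -> : (2 : R) = (5/4) * (4/3) * (6/5) by field.
rewrite lnM ?posrE ?mulr_gt0 // lnM ?posrE //.
have h1 := @ln_ge_1subV (5/4) ltac:(lra).
have h2 := @ln_ge_1subV (4/3) ltac:(lra).
have h3 := @ln_ge_1subV (6/5) ltac:(lra).
have e1 : (5/4 : R)^-1 = 4/5 by field.
have e2 : (4/3 : R)^-1 = 3/4 by field.
have e3 : (6/5 : R)^-1 = 5/6 by field.
rewrite e1 in h1; rewrite e2 in h2; rewrite e3 in h3. lra.
Qed.

Lemma ln3_le : ln (3 : R) <= 4/3.
Proof.
have -> : (3 : R) = (3/2) * (4/3) * (3/2) by field.
rewrite lnM ?posrE ?mulr_gt0 // lnM ?posrE //.
have h1 := @ln_le_sub1 (3/2) ltac:(lra).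
have h2 := @ln_le_sub1 (4/3) ltac:(lra).
lra.
Qed.

Lemma endpoint (p : R) : 0 < p -> p <= 1/2 ->
  (1 - p)^+2 * ln (1 - p) <= p^+2 * ln p.
Proof.
move=> p0 ph.
have q0 : 0 < 1 - p by lra.
have [p3|p3] := lerP p (1/3).
  have hq := @ln_le_sub1 _ q0.
  have h3 := @ln_ge_1subV (3 * p) ltac:(lra).
  rewrite lnM ?posrE // in h3.
  have l3 := ln3_le.
  have e : p * (3 * p)^-1 = 1/3 by field; lra.
  have h3' : p - 1/3 <= p * ln 3 + p * ln p.
    have := ler_wpM2l (ltW p0) h3; rewrite mulrBr mulr1 e mulrDr; lra.
  have hpl3 : p * ln 3 <= p * (4/3) by apply: ler_wpM2l => //; lra.
  have hql : (1 - p)^+2 * ln (1 - p) <= (1 - p)^+2 * (- p).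
    by apply: ler_wpM2l; [apply: sqr_ge0 | lra].
  have hA : p * (p - 1/3 - p * ln 3) <= p * (p * ln p) by apply: ler_wpM2l; lra.
  have hB : p * (p * ln 3) <= p * (p * (4/3)) by apply: ler_wpM2l => //; lra.
  have hC : 0 <= p * ((1 - p)^+2 - (p + 1)/3) by apply: mulr_ge0; nra.
  nra.
have l2 := ln2_ge.
have hq := @ln_le_sub1 (2 * (1 - p)) ltac:(lra).
have hp := @ln_ge_1subV (2 * p) ltac:(lra).
rewrite lnM ?posrE // in hp.
rewrite lnM ?posrE in hq; [|lra|lra].
have hq' := hq.
have e : p * (2 * p)^-1 = 1/2 by field; lra.
have hp' : p - 1/2 <= p * ln 2 + p * ln p.
  have := ler_wpM2l (ltW p0) hp; rewrite mulrBr mulr1 e mulrDr; lra.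
have hql : (1 - p)^+2 * ln (1 - p) <= (1 - p)^+2 * (2 * (1 - p) - 1 - ln 2).
  by apply: ler_wpM2l; [apply: sqr_ge0 | lra].
have hpl : p * (p - 1/2 - p * ln 2) <= p * (p * ln p).
  by apply: ler_wpM2l; [lra | lra].
have ha : 0 <= (1 - 2 * p) * (ln 2 - 37/60) by apply: mulr_ge0; lra.
have hb : 0 <= (p - 1/3) * (7/6 - p) by apply: mulr_ge0; lra.
nra.
Qed.

Lemma keyK (p t : R) : 0 < p -> p <= t -> t <= 1 - p ->
  t^+2 * ln t <= p^+2 * ln p.
Proof.
move=> p0 pt tq.
have t0 : 0 < t by lra.
have [lt|lt] := lerP (ln t) (-(1/2)).
  have h := @ln_le_sub1 (t / p) ltac:(by apply: divr_gt0).
  rewrite ln_div ?posrE // in h.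
  have e : p * (t / p - 1) = t - p by field; lra.
  have h1 : p * (ln t - ln p) <= t - p by rewrite -e; apply: ler_wpM2l => //; lra.
  have h2 : p * (p * (ln t - ln p)) <= p * (t - p) by apply: ler_wpM2l => //; lra.
  have h3 : (t^+2 - p^+2) * (ln t) <= (t^+2 - p^+2) * (-(1/2)).
    by apply: ler_wpM2l => //; nra.
  nra.
have q0 : 0 < 1 - p by lra.
have h := @ln_le_sub1 (t / (1 - p)) ltac:(by apply: divr_gt0).
rewrite ln_div ?posrE // in h.
have e : (1 - p) * (t / (1 - p) - 1) = t - (1 - p) by field; lra.
have h1 : (1 - p) * (ln t - ln (1 - p)) <= t - (1 - p).
  by rewrite -e; apply: ler_wpM2l => //; lra.
have h2 : (1 - p) * ((1 - p) * (ln t - ln (1 - p))) <= (1 - p) * (t - (1 - p)).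
  by apply: ler_wpM2l => //; lra.
have h3 : ((1 - p)^+2 - t^+2) * (-(1/2)) <= ((1 - p)^+2 - t^+2) * (ln t).
  by apply: ler_wpM2l; [nra | lra].
have hE := @endpoint p p0 ltac:(lra).
nra.
Qed.
End An.
Lemma pmin_le (R : realType) m N (P : 'M[R]_(m, N)) i x : pmin P <= P i x.
Proof.
rewrite /pmin (bigD1 i) //= ge_min; apply/orP; left.
by rewrite (bigD1 x) //= ge_min lexx.
Qed.

Lemma pmin_gt0 (R : realType) m N (P : 'M[R]_(m, N)) :
  (forall i x, 0 < P i x) -> 0 < pmin P.
Proof.
move=> h; rewrite /pmin; apply: (big_ind (fun y => 0 < y)) => //.
  by move=> a b a0 b0; rewrite lt_min a0 b0.
move=> i _; apply: (big_ind (fun y => 0 < y)) => //.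
by move=> a b a0 b0; rewrite lt_min a0 b0.
Qed.

Lemma pmax_ge (R : realType) m N (P : 'M[R]_(m, N)) i x : P i x <= pmax P.
Proof.
rewrite /pmax (bigD1 i) //= le_max; apply/orP; left.
by rewrite (bigD1 x) //= le_max lexx.
Qed.

Lemma entry_le (R : realType) m N (P : 'M[R]_(m, N)) (hN : (1 < N)%N) :
  prob_matrix_pos P -> forall i x, P i x <= 1 - pmin P.
Proof.
move=> [hp hs] i x.
pose y0 : 'I_N := Ordinal (ltnW hN).
pose y1 : 'I_N := Ordinal hN.
have [y yx] : exists y : 'I_N, y != x.
  case: (eqVneq x y0) => [->|hx]; first by exists y1.
  by exists y0; rewrite eq_sym.
have := hs i; rewrite (bigD1 x) //= (bigD1 y) //=.
have : 0 <= \sum_(j < N | (j != x) && (j != y)) P i j.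
  by apply: sumr_ge0 => j _; apply: ltW.
have := @pmin_le _ _ _ P i y.
lra.
Qed.

Lemma Lf_delta (R : realType) m N (P : 'M[R]_(m, N)) x i :
  Lf_ P x (delta_mx ord0 i) = P i x.
Proof.
rewrite /Lf /lin (bigD1 i) //= big1 ?addr0.
  by rewrite mxE !eqxx mul1r.
by move=> j ji; rewrite mxE eqxx /= (negbTE ji) mul0r.
Qed.

Lemma loss_diff (R : realType) m N (P : 'M[R]_(m, N)) x w : 0 < Lf_ P x w ->
  differentiable (lin_loss P x) w.
Proof.
move=> Lw0.
have -> : lin_loss P x = @codelen R \o Lf_ P x by [].
apply: differentiable_comp.
  by apply: linear_differentiable; exact: Lf_cont.
apply/derivable1_diffP.
by have [] := @codelen_is_derive R _ Lw0.
Qed.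

Theorem lemma2 (R : realType) (m N : nat) (hN : (1 < N)%N) (hm : (1 < m)%N)
  (P : 'M[R]_(m, N)) (hP : prob_matrix_pos P) (x : 'I_N) :
  convex_function (@simplex R m) (lin_loss P x) /\
  (forall w, @simplex R m w -> differentiable (lin_loss P x) w) /\
  (forall a : R,
     m%:R * (log2 (expR 1)) ^+ 2 * (pmax P ^+ 2)
       / (pmin P ^+ 2 * log2 (pmin P)^-1) <= a ->
     forall w, @simplex R m w ->
       grad_norm2 (lin_loss P x) w <= a * lin_loss P x w).
Proof.
have pm0 : 0 < pmin P by apply: pmin_gt0; case: hP.
have hbnd : forall i, pmin P <= P i x <= 1 - pmin P.
  by move=> i; rewrite pmin_le /=; apply: entry_le.
have Lpos : forall w, simplex w -> 0 < Lf_ P x w.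
  move=> w wS; have /andP[h _] := @Lf_bounds _ _ _ P x w _ _ wS hbnd; lra.
split; first exact: loss_convex.
split; first by move=> w wS; apply: loss_diff; apply: Lpos.
move=> a ha w wS.
have /andP[lb ub] := @Lf_bounds _ _ _ P x w _ _ wS hbnd.
have l0 := Lpos w wS.
rewrite /grad_norm2.
under eq_bigr do rewrite dloss // Lf_delta.
change (lin_loss P x w) with (- (ln (Lf_ P x w) / ln 2)).
move: lb ub l0 ha hbnd pm0; set l := Lf_ P x w; set pm := pmin P; set M := pmax P => lb ub l0 ha hbnd pm0.
have L2 : 0 < ln (2 : R) by rewrite ln_gt0 // ltr1n.
have i0 : 'I_m := Ordinal (ltnW hm).
have hb0 := hbnd i0.
have pmh : pm <= 1/2 by move: hb0 => /andP[u v]; lra.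
have A0 : ln pm < 0 by apply: ln_lt0; rewrite pm0 /=; lra.
have B0 : ln l <= 0 by apply: ln_le0; lra.
have M0 : 0 <= M by apply: le_trans (ltW pm0) _; exact: le_trans (@pmin_le _ _ _ P i0 x) (@pmax_ge _ _ _ P i0 x).
set c := (- ((ln (R:=R) 2)^-1 / l)).
have h1 : \sum_(i < m) (c * P i x) ^+ 2 <= \sum_(i < m) (c^+2 * M^+2).
  apply: ler_sum => i _; rewrite exprMn; apply: ler_wpM2l; first exact: sqr_ge0.
  have := @pmax_ge _ _ _ P i x; have := hbnd i; rewrite -/pm -/M => /andP[h h'] h''.
  rewrite !expr2; apply: ler_pM => //; lra.
apply: le_trans h1 _.
rewrite sumr_const card_ord -[X in X <= _]mulr_natl.
have K := @keyK R pm l pm0 lb ub.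
move: ha; rewrite /log2 expRK lnV ?posrE // => ha.
set X := m%:R * (c ^+ 2 * M ^+ 2).
have X0 : 0 <= X by rewrite /X; apply: mulr_ge0 => //; apply: mulr_ge0; exact: sqr_ge0.
set K0 := (m%:R * (1 / ln 2) ^+ 2 * M ^+ 2 / (pm ^+ 2 * (- ln pm / ln 2))) in ha.
have ell0 : 0 <= - (ln l / ln 2) by rewrite oppr_ge0; apply: mulr_le0_ge0 => //; rewrite invr_ge0 ltW.
apply: le_trans (ler_wpM2r ell0 ha).
have e : K0 * (- (ln l / ln 2)) = X * (l^+2 * (- ln l) / (pm^+2 * (- ln pm))).
  rewrite /K0 /X /c; field.
  by rewrite (lt_eqF A0) (gt_eqF pm0) (gt_eqF l0) (gt_eqF L2).
rewrite e; apply: ler_peMr => //.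
rewrite ler_pdivlMr; last by apply: mulr_gt0; [apply: exprn_gt0 | lra].
rewrite mul1r; nra.
Qed.
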